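(* Let $k\ge1$ be odd, $\omega=i\sqrt2$, and with $S=\begin{psmallmatrix}0&-1\\1&0\end{psmallmatrix}$, $T=\begin{psmallmatrix}1&1\\0&1\end{psmallmatrix}$, $T_\omega=\begin{psmallmatrix}1&\omega\\0&1\end{psmallmatrix}$, $U=TS$, let $W_{k,k}=\ker(\mathbf{1}+S)\cap\ker(\mathbf{1}+U+U^2)\cap\ker(\mathbf{1}+ST_\omega+T_\omega S+T_\omega^{-1}ST_\omega S)$. Let $\varepsilon=\begin{psmallmatrix}-1&0\\0&1\end{psmallmatrix}$, so $P|\varepsilon=P(-z,-\bar z)$. Then $W_{k,k}|\varepsilon=W_{k,k}$, and hence $W_{k,k}=W_{k,k}^1\oplus W_{k,k}^{-1}$, where $W_{k,k}^{\pm1}=W_{k,k}\cap\{P\in V_{k,k}:P(-z,-\bar z)=\pm P(z,\bar z)\}$.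
   Context: $V_{k,k}$: polynomials $\sum_{0\le i,j\le k}c_{ij}z^i\bar z^j$ over $\mathbb{C}$ with right action $(P|\gamma)(z,\bar z)=(cz+e)^k\overline{(cz+e)}^kP\!\left(\frac{az+b}{cz+e},\frac{\bar a\bar z+\bar b}{\bar c\bar z+\bar e}\right)$ for $\gamma=\begin{psmallmatrix}a&b\\c&e\end{psmallmatrix}$, extended linearly; $\ker(X)=\{P:P|X=0\}$; $W|\varepsilon=\{P|\varepsilon:P\in W\}$. *)

(* Defs.v *)
(* Complex numbers are modelled by algC (algebraic complex
   numbers), which contains i, sqrt 2 and has complex conjugation. *)
From mathcomp Require Import all_boot all_order all_algebra.
From mathcomp Require Import algC.
Set Implicit Arguments. Unset Strict Implicit. Unset Printing Implicit Defensive.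
Import Order.TTheory GRing.Theory Num.Theory.
Local Open Scope ring_scope.

(* A polynomial in two independent variables z, zbar is an element of
   {poly {poly algC}}: the outer variable is zbar, the inner one is z.
   The coefficient of z^i zbar^j of P is (P`_j)`_i. *)
Definition bipoly := {poly {poly algC}}.

Definition inV (k : nat) (P : bipoly) : Prop :=
  (size P <= k.+1)%N /\ forall j : nat, (size (P`_j)%R <= k.+1)%N.

Definition linZ (a b : algC) : bipoly := (a *: 'X + b%:P)%:P.
Definition linW (a b : algC) : bipoly := (a%:P) *: 'X + (b%:P)%:P.

(* (P|g)(z,zbar) = (cz+e)^k conj(cz+e)^k P((az+b)/(cz+e), conj-version),
   expanded: sum_{i,j} c_ij (az+b)^i (cz+e)^(k-i) (a'w+b')^j (c'w+e')^(k-j)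
   where ' is complex conjugation and w = zbar. *)
Definition act (k : nat) (g : 'M[algC]_2) (P : bipoly) : bipoly :=
  let a := g 0 0 in let b := g 0 1 in let c := g 1 0 in let e := g 1 1 in
  \sum_(i < k.+1) \sum_(j < k.+1)
     ((P`_j)`_i)%:P%:P * (linZ a b) ^+ i * (linZ c e) ^+ (k - i)
       * (linW a^* b^*) ^+ j * (linW c^* e^*) ^+ (k - j).

(* linear extension to a formal sum (with coefficients 1) of matrices *)
Definition act_sum (k : nat) (s : seq 'M[algC]_2) (P : bipoly) : bipoly :=
  \sum_(g <- s) act k g P.

Definition inKer (k : nat) (s : seq 'M[algC]_2) (P : bipoly) : Prop :=
  inV k P /\ act_sum k s P = 0.

Definition omega : algC := 'i * sqrtC 2.
Definition Smx : 'M[algC]_2 := \matrix_(i < 2, j < 2)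
  (if (i == 0) && (j == 1) then -1 else if (i == 1) && (j == 0) then 1 else 0).
Definition Tmx : 'M[algC]_2 := \matrix_(i < 2, j < 2)
  (if i == j then 1 else if (i == 0) && (j == 1) then 1 else 0).
Definition Tw : 'M[algC]_2 := \matrix_(i < 2, j < 2)
  (if i == j then 1 else if (i == 0) && (j == 1) then omega else 0).
Definition Umx : 'M[algC]_2 := Tmx *m Smx.
Definition epsmx : 'M[algC]_2 := \matrix_(i < 2, j < 2)
  (if i == j then (if i == 0 then -1 else 1) else 0).

Definition inW (k : nat) (P : bipoly) : Prop :=
  inKer k [:: 1%:M; Smx] P /\
  inKer k [:: 1%:M; Umx; Umx *m Umx] P /\
  inKer k [:: 1%:M; Smx *m Tw; Tw *m Smx; invmx Tw *m Smx *m Tw *m Smx] P.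

Definition negvars (P : bipoly) : bipoly :=
  (map_poly (fun q : {poly algC} => q \Po (- 'X)) P) \Po (- 'X).

Definition inWs (k : nat) (s : algC) (P : bipoly) : Prop :=
  inW k P /\ negvars P = s%:P%:P * P.

(* Main.v *)
Require Import Defs.
From mathcomp Require Import all_boot all_order all_algebra.
From mathcomp Require Import algC.
From mathcomp Require Import ring zify.
Import GRing.Theory Num.Theory.
Set Implicit Arguments. Unset Strict Implicit. Unset Printing Implicit Defensive.
Local Open Scope ring_scope.

Definition hom2 (m n : nat) (P A B C D : bipoly) : bipoly :=
  \sum_(i < m.+1) \sum_(j < n.+1)
     ((P`_j)`_i)%:P%:P * A ^+ i * B ^+ (m - i) * C ^+ j * D ^+ (n - j).

Definition Bd (m n : nat) (P : bipoly) : Prop :=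
  (size P <= n.+1)%N /\ forall j : nat, (size (P`_j)%R <= m.+1)%N.

Definition zz : bipoly := ('X : {poly algC})%:P.
Definition ww : bipoly := 'X.

Lemma act_hom2 k g P : act k g P =
  hom2 k k P (linZ (g 0 0) (g 0 1)) (linZ (g 1 0) (g 1 1))
             (linW (g 0 0)^* (g 0 1)^*) (linW (g 1 0)^* (g 1 1)^*).
Proof. by []. Qed.

Lemma expand1 (R : nzRingType) (p : {poly R}) n :
  (size p <= n)%N -> p = \sum_(i < n) p`_i *: 'X^i.
Proof.
move=> hs; rewrite -poly_def; apply/polyP => i; rewrite coef_poly.
case: ltnP => // hi; rewrite nth_default //; exact: leq_trans hs hi.
Qed.

Lemma expand m n P : Bd m n P ->
  P = \sum_(i < m.+1) \sum_(j < n.+1) ((P`_j)`_i)%:P%:P * zz ^+ i * ww ^+ j.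
Proof.
case=> hs hc.
rewrite exchange_big /=.
rewrite {1}(expand1 hs); apply: eq_bigr => j _.
rewrite -mul_polyC {1}(expand1 (hc j)) rmorph_sum mulr_suml.
apply: eq_bigr => i _.
by rewrite -mul_polyC rmorphM /= /zz rmorphXn.
Qed.

Section H.
Variables (A B C D : bipoly).

Lemma hom2D m n P Q : hom2 m n (P + Q) A B C D = hom2 m n P A B C D + hom2 m n Q A B C D.
Proof.
rewrite /hom2 -big_split; apply: eq_bigr => i _; rewrite -big_split.
by apply: eq_bigr => j _; rewrite !coefD !rmorphD /= !mulrDl.
Qed.

Lemma hom20 m n : hom2 m n 0 A B C D = 0.
Proof.
rewrite /hom2 big1 // => i _; rewrite big1 // => j _.
by rewrite !coef0 !rmorph0 !mul0r.
Qed.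

Lemma hom2_sum m n I (r : seq I) (F : I -> bipoly) :
  hom2 m n (\sum_(x <- r) F x) A B C D = \sum_(x <- r) hom2 m n (F x) A B C D.
Proof.
exact: (big_morph (fun P => hom2 m n P A B C D) (hom2D m n) (hom20 m n)).
Qed.

Lemma hom2C m n (c : algC) P :
  hom2 m n (c%:P%:P * P) A B C D = c%:P%:P * hom2 m n P A B C D.
Proof.
rewrite /hom2 mulr_sumr; apply: eq_bigr => i _; rewrite mulr_sumr.
apply: eq_bigr => j _; rewrite !coefCM !rmorphM /= !mulrA.
by [].
Qed.

End H.
Section H2.
Variables (A B C D : bipoly).

Lemma hom2E m n P : hom2 m n P A B C D = \sum_(i < m.+1) \sum_(j < n.+1)
     ((P`_j)`_i)%:P%:P * A ^+ i * B ^+ (m - i) * C ^+ j * D ^+ (n - j).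
Proof. by []. Qed.

Lemma hom2_mono m n (c : algC) i j : (i <= m)%N -> (j <= n)%N ->
  hom2 m n (c%:P%:P * zz ^+ i * ww ^+ j) A B C D =
  c%:P%:P * (A ^+ i * B ^+ (m - i) * C ^+ j * D ^+ (n - j)).
Proof.
move=> hi hj; rewrite -mulrA hom2C; congr (_ * _).
rewrite hom2E.
have hi' : (i < m.+1)%N by [].
have hj' : (j < n.+1)%N by [].
rewrite (bigD1 (Ordinal hi')) //= [X in _ + X = _]big1 => [|i2 hne]; last first.
  rewrite big1 // => j2 _.
  rewrite /zz -rmorphXn /= coefCM coefXn mulr_natr coefMn coefXn.
  have -> : (nat_of_ord i2 == i) = false.
    by apply: contraNF hne => /eqP h; apply/eqP/val_inj.
  by rewrite mul0rn !rmorph0 !mul0r.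
rewrite addr0 (bigD1 (Ordinal hj')) //= [X in _ + X = _]big1 => [|j2 hne]; last first.
  rewrite /zz -rmorphXn /= coefCM coefXn.
  have -> : (nat_of_ord j2 == j) = false.
    by apply: contraNF hne => /eqP h; apply/eqP/val_inj.
  by rewrite mulr0 coef0 !rmorph0 !mul0r.
by rewrite addr0 /zz -rmorphXn /= coefCM coefXn eqxx mulr_natr mulr1n coefXn eqxx !rmorph1 mul1r.
Qed.

Lemma hom2_mul m1 n1 m2 n2 P Q : Bd m1 n1 P -> Bd m2 n2 Q ->
  hom2 (m1 + m2) (n1 + n2) (P * Q) A B C D = hom2 m1 n1 P A B C D * hom2 m2 n2 Q A B C D.
Proof.
move=> hP hQ; rewrite {1}(expand hP) {1}(expand hQ).
rewrite [hom2 m1 n1 P _ _ _ _]hom2E [hom2 m2 n2 Q _ _ _ _]hom2E.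
rewrite mulr_suml hom2_sum mulr_suml; apply: eq_bigr => i1 _.
rewrite mulr_suml hom2_sum mulr_suml; apply: eq_bigr => j1 _.
rewrite mulr_sumr hom2_sum mulr_sumr; apply: eq_bigr => i2 _.
rewrite mulr_sumr hom2_sum mulr_sumr; apply: eq_bigr => j2 _.
set c1 := (P`_j1)`_i1; set c2 := (Q`_j2)`_i2.
have hi1 := ltn_ord i1; have hi2 := ltn_ord i2.
have hj1 := ltn_ord j1; have hj2 := ltn_ord j2.
rewrite (_ : (c1%:P%:P * zz ^+ i1 * ww ^+ j1) * (c2%:P%:P * zz ^+ i2 * ww ^+ j2) = (c1 * c2)%:P%:P * zz ^+ (i1 + i2) * ww ^+ (j1 + j2)); last first.
  by rewrite !rmorphM /= !exprD; ring.
rewrite hom2_mono; [|lia|lia].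
have -> : (m1 + m2 - (i1 + i2) = (m1 - i1) + (m2 - i2))%N by lia.
have -> : (n1 + n2 - (j1 + j2) = (n1 - j1) + (n2 - j2))%N by lia.
rewrite !rmorphM /= !exprD; ring.
Qed.

End H2.
Lemma Bd0 m n : Bd m n 0.
Proof. by split=> [|j]; rewrite ?size_poly0 // coef0 size_poly0. Qed.

Lemma BdD m n P Q : Bd m n P -> Bd m n Q -> Bd m n (P + Q).
Proof.
move=> [hP cP] [hQ cQ]; split.
  by apply: leq_trans (size_polyD _ _) _; rewrite geq_max hP hQ.
move=> j; rewrite coefD; apply: leq_trans (size_polyD _ _) _.
by rewrite geq_max cP cQ.
Qed.

Lemma Bd_sum m n I (r : seq I) (F : I -> bipoly) :
  (forall x, Bd m n (F x)) -> Bd m n (\sum_(x <- r) F x).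
Proof.
move=> h; apply: (big_ind (Bd m n)); [exact: Bd0 | exact: BdD | by []].
Qed.

Lemma Bd_mul m1 n1 m2 n2 P Q : Bd m1 n1 P -> Bd m2 n2 Q -> Bd (m1 + m2) (n1 + n2) (P * Q).
Proof.
move=> [hP cP] [hQ cQ]; split.
  apply: leq_trans (size_mul_leq _ _) _; lia.
move=> j; rewrite coefM.
apply: (big_ind (fun p : {poly algC} => (size p <= (m1 + m2).+1)%N)).
- by rewrite size_poly0.
- by move=> x y hx hy; apply: leq_trans (size_polyD _ _) _; rewrite geq_max hx hy.
- move=> l _; apply: leq_trans (size_mul_leq _ _) _.
  have := cP l; have := cQ (j - l)%N; lia.
Qed.

Lemma Bd_mul' m n m1 n1 m2 n2 P Q : (m1 + m2 = m)%N -> (n1 + n2 = n)%N ->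
  Bd m1 n1 P -> Bd m2 n2 Q -> Bd m n (P * Q).
Proof. by move=> <- <-; apply: Bd_mul. Qed.

Lemma BdC (c : algC) : Bd 0 0 c%:P%:P.
Proof.
split; first exact: size_polyC_leq1.
by move=> j; rewrite coefC; case: (j == 0)%N; rewrite ?size_polyC_leq1 ?size_poly0.
Qed.

Lemma Bd1 : Bd 0 0 1.
Proof. by have := BdC 1; rewrite !rmorph1. Qed.

Lemma Bd_exp m n e P : Bd m n P -> Bd (e * m) (e * n) (P ^+ e).
Proof.
move=> hP; elim: e => [|e IH]; first by rewrite expr0 !mul0n; exact: Bd1.
by rewrite exprS !mulSn; apply: Bd_mul.
Qed.

Lemma Bd_zz : Bd 1 0 zz.
Proof.
split; first exact: size_polyC_leq1.
move=> j; rewrite /zz coefC; case: (j == 0)%N; by rewrite ?size_polyX ?size_poly0.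
Qed.

Lemma Bd_ww : Bd 0 1 ww.
Proof.
split; first by rewrite /ww size_polyX.
by move=> j; rewrite /ww coefX; case: (j == 1)%N; rewrite ?size_poly1 ?size_poly0.
Qed.

Lemma linZE a b : linZ a b = a%:P%:P * zz + b%:P%:P.
Proof. by rewrite /linZ /zz rmorphD /= -mul_polyC rmorphM. Qed.

Lemma linWE a b : linW a b = a%:P%:P * ww + b%:P%:P.
Proof. by rewrite /linW /ww -mul_polyC. Qed.

Lemma Bd_linZ a b : Bd 1 0 (linZ a b).
Proof.
rewrite linZE; apply: BdD; first by apply: (Bd_mul' (m1:=0) (n1:=0)) => //; [exact: BdC| exact: Bd_zz].
have [h1 h2] := BdC b; split => // j; apply: leq_trans (h2 j) _; done.
Qed.

Lemma Bd_linW a b : Bd 0 1 (linW a b).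
Proof.
rewrite linWE; apply: BdD; first by apply: (Bd_mul' (m1:=0) (n1:=0)) => //; [exact: BdC| exact: Bd_ww].
have [h1 h2] := BdC b; split => //; apply: leq_trans h1 _; done.
Qed.

Section H3.
Variables (A B C D : bipoly).

Lemma hom2_mul' m n m1 n1 m2 n2 P Q : (m1 + m2 = m)%N -> (n1 + n2 = n)%N ->
  Bd m1 n1 P -> Bd m2 n2 Q ->
  hom2 m n (P * Q) A B C D = hom2 m1 n1 P A B C D * hom2 m2 n2 Q A B C D.
Proof. by move=> <- <-; apply: hom2_mul. Qed.

Lemma hom2_1 : hom2 0 0 1 A B C D = 1.
Proof.
rewrite hom2E !big_ord1 !coef1 /= !rmorph1.
by rewrite !expr0 !mulr1.
Qed.

Lemma hom2_C c : hom2 0 0 c%:P%:P A B C D = c%:P%:P.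
Proof. by rewrite -[c%:P%:P]mulr1 hom2C hom2_1. Qed.

Lemma hom2_exp m n e P : Bd m n P ->
  hom2 (e * m) (e * n) (P ^+ e) A B C D = (hom2 m n P A B C D) ^+ e.
Proof.
move=> hP; elim: e => [|e IH]; first by rewrite !expr0 !mul0n hom2_1.
rewrite !exprS !mulSn hom2_mul ?IH //; exact: Bd_exp.
Qed.

End H3.
Section H4.
Variables (A B C D : bipoly).

Lemma hom2_linZ a b : hom2 1 0 (linZ a b) A B C D = a%:P%:P * A + b%:P%:P * B.
Proof.
have -> : linZ a b = a%:P%:P * zz ^+ 1 * ww ^+ 0 + b%:P%:P * zz ^+ 0 * ww ^+ 0.
  by rewrite linZE !expr0 expr1 !mulr1.
by rewrite hom2D !hom2_mono //= !expr0 !expr1 !mulr1 !mul1r.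
Qed.

Lemma hom2_linW a b : hom2 0 1 (linW a b) A B C D = a%:P%:P * C + b%:P%:P * D.
Proof.
have -> : linW a b = a%:P%:P * zz ^+ 0 * ww ^+ 1 + b%:P%:P * zz ^+ 0 * ww ^+ 0.
  by rewrite linWE !expr0 expr1 !mulr1.
by rewrite hom2D !hom2_mono //= !expr0 !expr1 !mulr1 !mul1r.
Qed.

Lemma hom2_term k (c : algC) i j L1 L2 M1 M2 : (i <= k)%N -> (j <= k)%N ->
  Bd 1 0 L1 -> Bd 1 0 L2 -> Bd 0 1 M1 -> Bd 0 1 M2 ->
  hom2 k k (c%:P%:P * L1 ^+ i * L2 ^+ (k - i) * M1 ^+ j * M2 ^+ (k - j)) A B C D =
  c%:P%:P * (hom2 1 0 L1 A B C D) ^+ i * (hom2 1 0 L2 A B C D) ^+ (k - i)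
          * (hom2 0 1 M1 A B C D) ^+ j * (hom2 0 1 M2 A B C D) ^+ (k - j).
Proof.
move=> hi hj h1 h2 h3 h4.
have e1 := Bd_exp i h1; have e2 := Bd_exp (k - i) h2.
have e3 := Bd_exp j h3; have e4 := Bd_exp (k - j) h4.
rewrite !muln1 !muln0 in e1 e2 e3 e4.
have b1 : Bd i 0 (c%:P%:P * L1 ^+ i) by apply: (Bd_mul' (m1:=0) (n1:=0)) => //; exact: BdC.
have b2 : Bd k 0 (c%:P%:P * L1 ^+ i * L2 ^+ (k - i)) by apply: (Bd_mul' _ _ b1 e2); lia.
have b3 : Bd k j (c%:P%:P * L1 ^+ i * L2 ^+ (k - i) * M1 ^+ j) by apply: (Bd_mul' _ _ b2 e3); lia.
rewrite (hom2_mul' A B C D _ _ b3 e4); [|lia|lia].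
rewrite (hom2_mul' A B C D _ _ b2 e3); [|lia|lia].
rewrite (hom2_mul' A B C D _ _ b1 e2); [|lia|lia].
rewrite (hom2_mul' A B C D _ _ (BdC c) e1); [|lia|lia].
rewrite hom2_C.
have := hom2_exp A B C D i h1; rewrite !muln1 !muln0 => ->.
have := hom2_exp A B C D (k - i) h2; rewrite !muln1 !muln0 => ->.
have := hom2_exp A B C D j h3; rewrite !muln1 !muln0 => ->.
have := hom2_exp A B C D (k - j) h4; rewrite !muln1 !muln0 => ->.
by [].
Qed.

End H4.

Lemma mulmx2E (g h : 'M[algC]_2) i j : (g *m h) i j = g i 0 * h 0 j + g i 1 * h 1 j.
Proof.
rewrite mxE !big_ord_recl big_ord0 addr0.
by have -> : lift ord0 (ord0 : 'I_1) = 1 :> 'I_2 by apply: val_inj.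
Qed.

Lemma linZ_comb a b a' b' c' e' :
  a%:P%:P * linZ a' b' + b%:P%:P * linZ c' e' = linZ (a * a' + b * c') (a * b' + b * e').
Proof. rewrite !linZE !rmorphD !rmorphM /=; ring. Qed.

Lemma linW_comb a b a' b' c' e' :
  a%:P%:P * linW a' b' + b%:P%:P * linW c' e' = linW (a * a' + b * c') (a * b' + b * e').
Proof. rewrite !linWE !rmorphD !rmorphM /=; ring. Qed.

Lemma act_comp k g h P : Bd k k P -> act k (g *m h) P = act k h (act k g P).
Proof.
move=> hP.
rewrite [act k h _]act_hom2 [act k g P]act_hom2 [hom2 k k P _ _ _ _]hom2E hom2_sum.
rewrite act_hom2 hom2E; apply: eq_bigr => i _; rewrite hom2_sum; apply: eq_bigr => j _.
rewrite hom2_term; [| exact: ltn_ord i | exact: ltn_ord j | exact: Bd_linZ | exact: Bd_linZ | exact: Bd_linW | exact: Bd_linW].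
by rewrite !hom2_linZ !hom2_linW !linZ_comb !linW_comb !mulmx2E !rmorphD !rmorphM.
Qed.

Lemma Bd_act k g P : Bd k k (act k g P).
Proof.
rewrite act_hom2 hom2E; apply: Bd_sum => i; apply: Bd_sum => j.
have hi := ltn_ord i; have hj := ltn_ord j.
have e1 := Bd_exp i (Bd_linZ (g 0 0) (g 0 1)).
have e2 := Bd_exp (k - i) (Bd_linZ (g 1 0) (g 1 1)).
have e3 := Bd_exp j (Bd_linW (g 0 0)^* (g 0 1)^*).
have e4 := Bd_exp (k - j) (Bd_linW (g 1 0)^* (g 1 1)^*).
rewrite !muln1 !muln0 in e1 e2 e3 e4.
set c := (P`_j)`_i.
have b1 : Bd i 0 (c%:P%:P * linZ (g 0 0) (g 0 1) ^+ i) by apply: (Bd_mul' (m1:=0) (n1:=0)) => //; exact: BdC.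
have b2 : Bd k 0 (c%:P%:P * linZ (g 0 0) (g 0 1) ^+ i * linZ (g 1 0) (g 1 1) ^+ (k - i)).
  by apply: (Bd_mul' _ _ b1 e2); lia.
have b3 : Bd k j (c%:P%:P * linZ (g 0 0) (g 0 1) ^+ i * linZ (g 1 0) (g 1 1) ^+ (k - i)
   * linW (g 0 0)^* (g 0 1)^* ^+ j).
  by apply: (Bd_mul' _ _ b2 e3); lia.
by apply: (Bd_mul' _ _ b3 e4); lia.
Qed.
Lemma actD k g P Q : act k g (P + Q) = act k g P + act k g Q.
Proof. by rewrite !act_hom2 hom2D. Qed.
Lemma act0 k g : act k g 0 = 0.
Proof. by rewrite act_hom2 hom20. Qed.
Lemma actC k g (c : algC) P : act k g (c%:P%:P * P) = c%:P%:P * act k g P.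
Proof. by rewrite !act_hom2 hom2C. Qed.
Lemma actN k g P : act k g (- P) = - act k g P.
Proof.
have -> : - P = (-1)%:P%:P * P by rewrite !rmorphN !rmorph1 mulN1r.
by rewrite actC !rmorphN !rmorph1 mulN1r.
Qed.

Definition mx2 (a b c d : algC) : 'M[algC]_2 :=
  \matrix_(i < 2, j < 2) if i == 0 then (if j == 0 then a else b) else (if j == 0 then c else d).

Lemma mx2_00 a b c d : mx2 a b c d 0 0 = a. Proof. by rewrite mxE. Qed.
Lemma mx2_01 a b c d : mx2 a b c d 0 1 = b. Proof. by rewrite mxE. Qed.
Lemma mx2_10 a b c d : mx2 a b c d 1 0 = c. Proof. by rewrite mxE. Qed.
Lemma mx2_11 a b c d : mx2 a b c d 1 1 = d. Proof. by rewrite mxE. Qed.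

Lemma mx2P (g : 'M[algC]_2) : g = mx2 (g 0 0) (g 0 1) (g 1 0) (g 1 1).
Proof.
apply/matrixP => i j; rewrite mxE.
case: i => [[|[|//]] hi]; case: j => [[|[|//]] hj] /=;
  congr (g _ _); exact: val_inj.
Qed.

Lemma mx2_mul a b c d a' b' c' d' :
  mx2 a b c d *m mx2 a' b' c' d' =
  mx2 (a * a' + b * c') (a * b' + b * d') (c * a' + d * c') (c * b' + d * d').
Proof.
rewrite [LHS]mx2P !mulmx2E !mx2_00 !mx2_01 !mx2_10 !mx2_11. by [].
Qed.

Lemma mx2_eq a b c d a' b' c' d' : a = a' -> b = b' -> c = c' -> d = d' ->
  mx2 a b c d = mx2 a' b' c' d'.
Proof. by move=> -> -> -> ->. Qed.

Lemma mx2N a b c d : - mx2 a b c d = mx2 (- a) (- b) (- c) (- d).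
Proof. by apply/matrixP => i j; rewrite !mxE; case: (i == 0); case: (j == 0). Qed.

Lemma act_mx2 k a b c d P : act k (mx2 a b c d) P =
  hom2 k k P (linZ a b) (linZ c d) (linW a^* b^*) (linW c^* d^*).
Proof. by rewrite act_hom2 mx2_00 mx2_01 mx2_10 mx2_11. Qed.

Lemma sign4 (k i j : nat) (c : bipoly) (x y z w : bipoly) : (i <= k)%N -> (j <= k)%N ->
  c * (-x) ^+ i * (-y) ^+ (k - i) * (-z) ^+ j * (-w) ^+ (k - j) =
  c * x ^+ i * y ^+ (k - i) * z ^+ j * w ^+ (k - j).
Proof.
move=> hi hj.
have sg : forall (x y : bipoly) l, (l <= k)%N -> (- x) ^+ l * (- y) ^+ (k - l) = (-1) ^+ k * (x ^+ l * y ^+ (k - l)).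
  by move=> x0 y0 l hl; rewrite (exprNn x0) (exprNn y0) mulrACA -exprD subnKC.
have s1 := sg x y i hi.
have s2 := sg z w j hj.
have s3 : ((-1) ^+ k * (-1) ^+ k = 1 :> bipoly) by rewrite -exprMn mulrNN mulr1 expr1n.
transitivity (c * ((-x) ^+ i * (-y) ^+ (k - i)) * ((-z) ^+ j * (-w) ^+ (k - j))); first by ring.
rewrite s1 s2.
transitivity (c * ((-1) ^+ k * (-1) ^+ k) * (x ^+ i * y ^+ (k - i)) * (z ^+ j * w ^+ (k - j))); first by ring.
rewrite s3; ring.
Qed.

Lemma act_sign k a b c d P :
  act k (mx2 (- a) (- b) (- c) (- d)) P = act k (mx2 a b c d) P.
Proof.
rewrite !act_mx2 !hom2E; apply: eq_bigr => i _; apply: eq_bigr => j _.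
have e1 : linZ (- a) (- b) = - linZ a b by rewrite !linZE !rmorphN /=; ring.
have e2 : linZ (- c) (- d) = - linZ c d by rewrite !linZE !rmorphN /=; ring.
have e3 : linW (- a)^* (- b)^* = - linW a^* b^* by rewrite !linWE !rmorphN /=; ring.
have e4 : linW (- c)^* (- d)^* = - linW c^* d^* by rewrite !linWE !rmorphN /=; ring.
rewrite e1 e2 e3 e4; apply: sign4; [exact: ltn_ord i | exact: ltn_ord j].
Qed.

Lemma act_negm k g P : act k (- g) P = act k g P.
Proof. by rewrite [g]mx2P mx2N act_sign. Qed.

Lemma act_one k P : Bd k k P -> act k 1%:M P = P.
Proof.
move=> hP.
have -> : (1%:M : 'M[algC]_2) = mx2 1 0 0 1.
  by rewrite [LHS]mx2P !mxE.
rewrite act_mx2 !rmorph0 !rmorph1.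
have -> : linZ 1 0 = zz by rewrite linZE !rmorph1 !rmorph0 mul1r addr0.
have -> : linZ 0 1 = 1 by rewrite linZE !rmorph1 !rmorph0 mul0r add0r.
have -> : linW 1 0 = ww by rewrite linWE !rmorph1 !rmorph0 mul1r addr0.
have -> : linW 0 1 = 1 by rewrite linWE !rmorph1 !rmorph0 mul0r add0r.
rewrite [RHS](expand hP) hom2E; apply: eq_bigr => i _; apply: eq_bigr => j _.
by rewrite !expr1n !mulr1.
Qed.
Lemma om2 : omega * omega = -2.
Proof. by rewrite /omega mulrACA -!expr2 sqrCi sqrtCK mulN1r. Qed.

Lemma Smx2 : Smx = mx2 0 (-1) 1 0.
Proof. by rewrite [LHS]mx2P !mxE. Qed.
Lemma Tmx2 : Tmx = mx2 1 1 0 1.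
Proof. by rewrite [LHS]mx2P !mxE. Qed.
Lemma Tw2 : Tw = mx2 1 omega 0 1.
Proof. by rewrite [LHS]mx2P !mxE. Qed.
Lemma eps2 : epsmx = mx2 (-1) 0 0 1.
Proof. by rewrite [LHS]mx2P !mxE. Qed.
Lemma one2 : (1%:M : 'M[algC]_2) = mx2 1 0 0 1.
Proof. by rewrite [LHS]mx2P !mxE. Qed.
Lemma Twi2 : invmx Tw = mx2 1 (- omega) 0 1.
Proof.
have h : Tw *m mx2 1 (- omega) 0 1 = 1%:M.
  rewrite Tw2 mx2_mul one2; apply: mx2_eq; ring.
have [u _] := mulmx1_unit h.
by rewrite -(mulKmx u (mx2 1 (- omega) 0 1)) h mulmx1.
Qed.

Definition Rx : 'M[algC]_2 := mx2 (- omega) 1 1 0.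
Definition R2 : 'M[algC]_2 := mx2 0 1 1 0.

Ltac mxsimp := rewrite /Rx /R2 /Umx ?Twi2 ?Smx2 ?Tmx2 ?Tw2 ?eps2 ?one2 ?mx2N !mx2_mul ?mx2N;
  apply: mx2_eq; ring: om2.

Lemma iS : epsmx *m Smx = - (Smx *m epsmx). Proof. mxsimp. Qed.
Lemma i1 : epsmx *m 1%:M = 1%:M *m epsmx. Proof. mxsimp. Qed.
Lemma iX0 : epsmx *m 1%:M = (Smx *m Tw) *m Rx. Proof. mxsimp. Qed.
Lemma iX1 : epsmx *m (Smx *m Tw) = (invmx Tw *m Smx *m Tw *m Smx) *m Rx. Proof. mxsimp. Qed.
Lemma iX2 : epsmx *m (Tw *m Smx) = 1%:M *m Rx. Proof. mxsimp. Qed.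
Lemma iX3 : epsmx *m (invmx Tw *m Smx *m Tw *m Smx) = - ((Tw *m Smx) *m Rx). Proof. mxsimp. Qed.
Lemma iU0 : epsmx *m 1%:M = Smx *m 1%:M *m R2. Proof. mxsimp. Qed.
Lemma iU1 : epsmx *m Umx = - (Smx *m (Umx *m Umx) *m R2). Proof. mxsimp. Qed.
Lemma iU2 : epsmx *m (Umx *m Umx) = - (Smx *m Umx *m R2). Proof. mxsimp. Qed.
Lemma iee : epsmx *m epsmx = 1%:M. Proof. mxsimp. Qed.

Lemma conjp k P x y R : Bd k k P -> epsmx *m x = y *m R ->
  act k x (act k epsmx P) = act k R (act k y P).
Proof. by move=> hP e; rewrite -act_comp // e act_comp. Qed.

Lemma conjn k P x y R : Bd k k P -> epsmx *m x = - (y *m R) ->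
  act k x (act k epsmx P) = act k R (act k y P).
Proof. by move=> hP e; rewrite -act_comp // e act_negm act_comp. Qed.

Lemma perm4 (a b c d : bipoly) : b + (d + (a + (c + 0))) = a + (b + (c + (d + 0))).
Proof. ring. Qed.
Lemma perm3n (a b c : bipoly) : - a + (- c + (- b + 0)) = - (a + (b + (c + 0))).
Proof. ring. Qed.

Lemma eps_W k P : inW k P -> inW k (act k epsmx P).
Proof.
move=> [[hV hS] [[_ hU] [_ hX]]].
have hP : Bd k k P := hV.
have hQ : Bd k k (act k epsmx P) := Bd_act k epsmx P.
move: hS hU hX; rewrite /act_sum !big_cons !big_nil => hS hU hX.
split; [|split].
- split => //; rewrite /act_sum !big_cons !big_nil.
  rewrite (conjp hP i1) (conjn hP iS).
  by have := congr1 (act k epsmx) hS; rewrite !actD !act0.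
- split => //; rewrite /act_sum !big_cons !big_nil.
  rewrite (conjp hP iU0) (conjn hP iU1) (conjn hP iU2).
  rewrite ![act k (Smx *m _) P]act_comp //.
  have hS' : act k Smx P = - P.
    by move: hS; rewrite act_one // addr0 => /eqP; rewrite addrC addr_eq0 => /eqP.
  rewrite hS' !actN.
  have := congr1 (act k R2) hU; rewrite !actD !act0 => H.
  by rewrite perm3n H oppr0.
- split => //; rewrite /act_sum !big_cons !big_nil.
  rewrite (conjp hP iX0) (conjp hP iX1) (conjp hP iX2) (conjn hP iX3).
  have := congr1 (act k Rx) hX; rewrite !actD !act0 => H.
  by rewrite perm4 H.
Qed.

Lemma act_sumD k s P Q : act_sum k s (P + Q) = act_sum k s P + act_sum k s Q.
Proof. by rewrite /act_sum -big_split; apply: eq_bigr => g _; rewrite actD. Qed.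

Lemma act_sumC k s c P : act_sum k s (c%:P%:P * P) = c%:P%:P * act_sum k s P.
Proof. by rewrite /act_sum mulr_sumr; apply: eq_bigr => g _; rewrite actC. Qed.

Lemma BdCmul k c P : Bd k k P -> Bd k k (c%:P%:P * P).
Proof. by move=> h; apply: (Bd_mul' (m1:=0) (n1:=0)) => //; exact: BdC. Qed.

Lemma inKer_add k s P Q : inKer k s P -> inKer k s Q -> inKer k s (P + Q).
Proof. by move=> [h1 e1] [h2 e2]; split; [exact: BdD | rewrite act_sumD e1 e2 addr0]. Qed.

Lemma inKer_scale k s c P : inKer k s P -> inKer k s (c%:P%:P * P).
Proof. by move=> [h1 e1]; split; [exact: BdCmul | rewrite act_sumC e1 mulr0]. Qed.

Lemma inW_add k P Q : inW k P -> inW k Q -> inW k (P + Q).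
Proof.
by move=> [a [b c]] [a' [b' c']]; split; [|split]; apply: inKer_add.
Qed.

Lemma inW_scale k c P : inW k P -> inW k (c%:P%:P * P).
Proof. by move=> [a [b c']]; split; [|split]; apply: inKer_scale. Qed.

Lemma nv_C (c : algC) : (map_poly (comp_poly (- 'X)) (c%:P%:P : bipoly)) \Po - 'X = c%:P%:P.
Proof. by rewrite map_polyC /= !comp_polyC. Qed.
Lemma nv_zz : (map_poly (comp_poly (- 'X)) zz) \Po - 'X = - zz.
Proof. by rewrite /zz map_polyC /= comp_polyC comp_polyX rmorphN. Qed.
Lemma nv_ww : (map_poly (comp_poly (- 'X)) ww) \Po - 'X = - ww.
Proof. by rewrite /ww map_polyX comp_polyX. Qed.

Lemma negvars_act k P : Bd k k P -> negvars P = act k epsmx P.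
Proof.
move=> hP.
rewrite eps2 act_mx2 !rmorphN !rmorph0 !rmorph1.
have -> : linZ (-1) 0 = - zz by rewrite linZE !rmorphN !rmorph1 !rmorph0 mulN1r addr0.
have -> : linZ 0 1 = 1 by rewrite linZE !rmorph1 !rmorph0 mul0r add0r.
have -> : linW (-1) 0 = - ww by rewrite linWE !rmorphN !rmorph1 !rmorph0 mulN1r addr0.
have -> : linW 0 1 = 1 by rewrite linWE !rmorph1 !rmorph0 mul0r add0r.
rewrite /negvars (_ : (fun q : {poly algC} => q \Po - 'X) = comp_poly (- 'X)) //.
rewrite {1}(expand hP) hom2E !rmorph_sum; apply: eq_bigr => i _.
rewrite !rmorph_sum; apply: eq_bigr => j _.
rewrite !rmorphM !rmorphXn /= !expr1n !mulr1.
congr (_ * _ ^+ _ * _ ^+ _); [exact: nv_C | exact: nv_zz | exact: nv_ww].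
Qed.

Lemma act_eps2 k P : Bd k k P -> act k epsmx (act k epsmx P) = P.
Proof. by move=> hP; rewrite -act_comp // iee act_one. Qed.

Lemma half2 : ((2^-1 : algC) + 2^-1 = 1).
Proof. by field. Qed.

Unset Implicit Arguments.
Theorem proposition5p10 (k : nat) (hk : (1 <= k)%N) (hodd : odd k) :
  (* W_{k,k} | eps = W_{k,k} *)
  ((forall P : bipoly, inW k P -> inW k (act k epsmx P)) /\
   (forall Q : bipoly, inW k Q -> exists P : bipoly, inW k P /\ act k epsmx P = Q))
  /\
  (* W_{k,k} = W^1 (+) W^{-1} *)
  ((forall P : bipoly, inW k P ->
      exists P1 P2 : bipoly, inWs k 1 P1 /\ inWs k (-1) P2 /\ P = P1 + P2) /\
   (forall P : bipoly, inWs k 1 P -> inWs k (-1) P -> P = 0)).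
Proof.
split; [split|split].
- exact: eps_W.
- move=> Q hQ; exists (act k epsmx Q); split; first exact: eps_W.
  by apply: act_eps2; case: hQ => [[]].
- move=> P hP.
  have hB : Bd k k P by case: hP => [[]].
  have hE := eps_W hP.
  set h : algC := 2^-1.
  exists (h%:P%:P * (P + act k epsmx P)), (h%:P%:P * (P + (-1)%:P%:P * act k epsmx P)).
  split; [split|split; [split|]].
  + by apply: inW_scale; apply: inW_add.
  + rewrite (negvars_act (BdCmul h (BdD hB (Bd_act k epsmx P)))).
    by rewrite actC actD act_eps2 // rmorph1 mul1r addrC.
  + by apply: inW_scale; apply: inW_add => //; apply: inW_scale.
  + rewrite (negvars_act (BdCmul h (BdD hB (BdCmul (-1) (Bd_act k epsmx P))))).
    rewrite actC actD actC act_eps2 //.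
    move: (act k epsmx P) (h%:P%:P) => e c.
    rewrite !rmorphN !rmorph1; ring.
  + transitivity ((h + h)%:P%:P * P); last first.
      by rewrite !rmorphD /= !rmorphN !rmorph1; ring.
    by rewrite half2 !rmorph1 mul1r.
- move=> P [_ h1] [_ h2].
  rewrite h1 !rmorph1 mul1r !rmorphN !rmorph1 mulN1r in h2.
  have : (2^-1 + 2^-1 : algC)%:P%:P * P = 0.
    by rewrite !rmorphD /= mulrDl {2}h2 mulrN addrN.
  by rewrite half2 !rmorph1 mul1r.
Qed.
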